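(* Let $A\in\mathbb{R}^{l_1\times n}$, let $x^{(2)}_1,\dots,x^{(2)}_{l_2}\in\mathbb{R}^n$ and $x^{(3)}_1,\dots,x^{(3)}_{l_3}\in\mathbb{R}^n$, let $0<\epsilon<1$, $\delta>0$, $A^{*}=(A^TA+\delta I)^{-1}$, and for $p\ge 1$ let $e_p\in\mathbb{R}^p$ be the all-ones vector. For $\lambda>0$ and multipliers $(\alpha_0,\alpha,\beta)\in\mathbb{R}\times[0,1]^{l_2}\times[0,1]^{l_3}$ put $$w_1=-\frac{1}{\lambda}A^{*}\Big(\alpha_0A^Te_{l_1}+\sum_{i=1}^{l_2}\alpha_i x^{(2)}_i+\sum_{k=1}^{l_3}\beta_k x^{(3)}_k\Big),\qquad b_1=\frac{\alpha_0}{\lambda},\qquad f_1(x)=x^Tw_1+b_1 .$$ Let $\lambda\mapsto(\alpha_0(\lambda),\alpha(\lambda),\beta(\lambda))$ be a solution path of the first QPP, i.e. for every $\lambda>0$ it satisfies, with $w_1,b_1,f_1$ built from $(\lambda,\alpha_0(\lambda),\alpha(\lambda),\beta(\lambda))$: (a) $\alpha_i(\lambda)=1$ if $-f_1(x^{(2)}_i)<1$, $\alpha_i(\lambda)=0$ if $-f_1(x^{(2)}_i)>1$, $\alpha_i(\lambda)\in[0,1]$ if $-f_1(x^{(2)}_i)=1$; (b) $\beta_k(\lambda)=1$ if $-f_1(x^{(3)}_k)<1-\epsilon$, $\beta_k(\lambda)=0$ if $-f_1(x^{(3)}_k)>1-\epsilon$, $\beta_k(\lambda)\in[0,1]$ if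 $-f_1(x^{(3)}_k)=1-\epsilon$; (c) $(l_1-e_{l_1}^TAA^{*}A^Te_{l_1})\alpha_0+\sum_{i=1}^{l_2}(1-e_{l_1}^TAA^{*}x^{(2)}_i)\alpha_i+\sum_{k=1}^{l_3}(1-e_{l_1}^TAA^{*}x^{(3)}_k)\beta_k=0$. Let $\lambda^{l}>\lambda^{l+1}>0$ be such that the index sets $\mathcal{E}_B(\lambda)=\{i:-f_1(x^{(2)}_i)=1\}$, $\mathcal{L}_B(\lambda)=\{i:-f_1(x^{(2)}_i)<1\}$, $\mathcal{R}_B(\lambda)=\{i:-f_1(x^{(2)}_i)>1\}$, $\mathcal{E}_C(\lambda)=\{k:-f_1(x^{(3)}_k)=1-\epsilon\}$, $\mathcal{L}_C(\lambda)=\{k:-f_1(x^{(3)}_k)<1-\epsilon\}$, $\mathcal{R}_C(\lambda)=\{k:-f_1(x^{(3)}_k)>1-\epsilon\}$ are constant for $\lambda\in(\lambda^{l+1},\lambda^{l}]$; denote them $\mathcal{E}^{1,l}_B,\mathcal{L}^{1,l}_B,\mathcal{R}^{1,l}_B,\mathcal{E}^{1,l}_C,\mathcal{L}^{1,l}_C,\mathcal{R}^{1,l}_C$, and denote by $\alpha_0^l,\alpha_i^l,\beta_k^l,w_1^l,f_1^l$ the values at $\lambda=\lambda^l$. Let $m_1=|\mathcal{E}^{1,l}_B|$, $m_2=|\mathcal{E}^{1,l}_C|$, let $X_B\in\mathbb{R}^{m_1\times n}$ (resp. $X_C\in\mathbb{R}^{m_2\times n}$) have rows $(x^{(2)}_i)^T$,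 $i\in\mathcal{E}^{1,l}_B$ (resp. $(x^{(3)}_k)^T$, $k\in\mathcal{E}^{1,l}_C$), and define $$\bar A^l=\begin{pmatrix} l_1-e_{l_1}^TAA^{*}A^Te_{l_1} & e_{m_1}^T-e_{l_1}^TAA^{*}X_B^T & e_{m_2}^T-e_{l_1}^TAA^{*}X_C^T\\ -e_{m_1}+X_BA^{*}A^Te_{l_1} & X_BA^{*}X_B^T & X_BA^{*}X_C^T\\ -e_{m_2}+X_CA^{*}A^Te_{l_1} & X_CA^{*}X_B^T & X_CA^{*}X_C^T\end{pmatrix},\qquad \bar b=\begin{pmatrix}0\\ e_{m_1}\\ (1-\epsilon)e_{m_2}\end{pmatrix}.$$ Assume $\bar A^l$ is invertible and write $(\bar A^l)^{-1}\bar b=(\vartheta_0^l,(\vartheta_i^l)_{i\in\mathcal{E}^{1,l}_B},(\nu_k^l)_{k\in\mathcal{E}^{1,l}_C})$ (entries in the order of the rows of $X_B$, $X_C$). Then for every $\lambda$ with $\lambda^{l}>\lambda>\lambda^{l+1}$: $\alpha_0(\lambda)=\alpha_0^l-(\lambda^l-\lambda)\vartheta_0^l$; $\alpha_i(\lambda)=\alpha_i^l-(\lambda^l-\lambda)\vartheta_i^l$ for $i\in\mathcal{E}^{1,l}_B$; $\beta_k(\lambda)=\beta_k^l-(\lambda^l-\lambda)\nu_k^l$ for $k\in\mathcal{E}^{1,l}_C$; so these are piecewise linear in $\lambda$. Moreover $$w_1=\frac{\lambda^l}{\lambda}(w_1^l+h_1^l)-h_1^l,\qquad f_1(x)=\frac{\lambda^l}{\lambda}\big(f_1^l(x)-h_2^l(x)\big)+h_2^l(x),$$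 so $w_1$ and $f_1$ are piecewise linear in $1/\lambda$, where $h_1^l=A^{*}\big(\vartheta_0^lA^Te_{l_1}+\sum_{i\in\mathcal{E}^{1,l}_B}\vartheta_i^lx^{(2)}_i+\sum_{k\in\mathcal{E}^{1,l}_C}\nu_k^lx^{(3)}_k\big)$ and $h_2^l(x)=\vartheta_0^l-x^Th_1^l$.
   Context: This concerns the first of the two quadratic programs of the twin multi-class support vector machine: given class-$+1$ samples (rows of $A$), class-$-1$ samples $x^{(2)}_i$ and remaining samples $x^{(3)}_k$, solve $\min_{w_1,b_1,\xi,\eta}\ \frac{\lambda}{2}\|Aw_1+b_1e_{l_1}\|^2+\sum_i\xi_i+\sum_k\eta_k$ subject to $-(w_1^Tx^{(2)}_i+b_1)+\xi_i\ge 1$, $-(w_1^Tx^{(3)}_k+b_1)+\eta_k\ge 1-\epsilon$, $\xi,\eta\ge 0$, where $\lambda=1/c_1$ is the regularization parameter; $\alpha_i,\beta_k$ are the Lagrange multipliers of the two families of inequality constraints and $\alpha_0=\lambda b_1$. Following the paper, the hyperplane is expressed in terms of the multipliers by the displayed formula for $w_1$ with the regularized inverse $A^{*}$, conditions (a)–(b) are the KKT complementarity relations and (c) is the stationarity condition in $b_1$ combined with that expression for $w_1$. The values $\lambda^l$ are consecutive breakpoints (''events'') of the path, i.e. values at which one of the index sets changes. *)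

(* Defs.v *)
From HB Require Import structures.
From mathcomp Require Import all_boot all_order all_algebra.
Set Implicit Arguments. Unset Strict Implicit. Unset Printing Implicit Defensive.
Import Order.TTheory GRing.Theory Num.Theory.
Local Open Scope ring_scope.

Definition sc (R : realFieldType) (M : 'M[R]_1) : R := M ord0 ord0.

Definition ones (R : realFieldType) (p : nat) : 'cV[R]_p := const_mx 1.

Definition Astar (R : realFieldType) (l1 n : nat) (A : 'M[R]_(l1, n)) (delta : R)
  : 'M[R]_n := invmx (A^T *m A + delta%:M).

Definition w1 (R : realFieldType) (l1 l2 l3 n : nat) (A : 'M[R]_(l1, n))
  (x2 : 'I_l2 -> 'cV[R]_n) (x3 : 'I_l3 -> 'cV[R]_n) (delta lam a0 : R)
  (a : 'I_l2 -> R) (b : 'I_l3 -> R) : 'cV[R]_n :=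
  - (lam^-1 *: (Astar A delta *m
      (a0 *: (A^T *m ones R l1) + \sum_(i < l2) a i *: x2 i
                                + \sum_(k < l3) b k *: x3 k))).

Definition b1 (R : realFieldType) (lam a0 : R) : R := a0 / lam.

Definition f1 (R : realFieldType) (l1 l2 l3 n : nat) (A : 'M[R]_(l1, n))
  (x2 : 'I_l2 -> 'cV[R]_n) (x3 : 'I_l3 -> 'cV[R]_n) (delta lam a0 : R)
  (a : 'I_l2 -> R) (b : 'I_l3 -> R) (x : 'cV[R]_n) : R :=
  sc (x^T *m w1 A x2 x3 delta lam a0 a b) + b1 lam a0.

Definition solution_path (R : realFieldType) (l1 l2 l3 n : nat) (A : 'M[R]_(l1, n))
  (x2 : 'I_l2 -> 'cV[R]_n) (x3 : 'I_l3 -> 'cV[R]_n) (eps delta : R)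
  (alpha0 : R -> R) (alpha : R -> 'I_l2 -> R) (beta : R -> 'I_l3 -> R) : Prop :=
  forall lam : R, 0 < lam ->
    let f := f1 A x2 x3 delta lam (alpha0 lam) (alpha lam) (beta lam) in
    let As := Astar A delta in
    let e := ones R l1 in
    (forall i, 0 <= alpha lam i <= 1) /\ (forall k, 0 <= beta lam k <= 1) /\
    (forall i : 'I_l2,
       (- f (x2 i) < 1 -> alpha lam i = 1) /\
       (- f (x2 i) > 1 -> alpha lam i = 0) /\
       (- f (x2 i) = 1 -> 0 <= alpha lam i <= 1)) /\
    (forall k : 'I_l3,
       (- f (x3 k) < 1 - eps -> beta lam k = 1) /\
       (- f (x3 k) > 1 - eps -> beta lam k = 0) /\
       (- f (x3 k) = 1 - eps -> 0 <= beta lam k <= 1)) /\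
    ((l1%:R - sc (e^T *m A *m As *m A^T *m e)) * alpha0 lam
     + \sum_(i < l2) (1 - sc (e^T *m A *m As *m x2 i)) * alpha lam i
     + \sum_(k < l3) (1 - sc (e^T *m A *m As *m x3 k)) * beta lam k = 0).

Section IndexSets.
Variables (R : realFieldType) (l1 l2 l3 n : nat) (A : 'M[R]_(l1, n))
  (x2 : 'I_l2 -> 'cV[R]_n) (x3 : 'I_l3 -> 'cV[R]_n) (eps delta : R)
  (alpha0 : R -> R) (alpha : R -> 'I_l2 -> R) (beta : R -> 'I_l3 -> R).

Definition f1_at (lam : R) (x : 'cV[R]_n) : R :=
  f1 A x2 x3 delta lam (alpha0 lam) (alpha lam) (beta lam) x.

Definition EB (lam : R) : {set 'I_l2} := [set i | - f1_at lam (x2 i) == 1].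
Definition LB (lam : R) : {set 'I_l2} := [set i | - f1_at lam (x2 i) < 1].
Definition RB (lam : R) : {set 'I_l2} := [set i | - f1_at lam (x2 i) > 1].
Definition EC (lam : R) : {set 'I_l3} := [set k | - f1_at lam (x3 k) == 1 - eps].
Definition LC (lam : R) : {set 'I_l3} := [set k | - f1_at lam (x3 k) < 1 - eps].
Definition RC (lam : R) : {set 'I_l3} := [set k | - f1_at lam (x3 k) > 1 - eps].
End IndexSets.

(* X_B: matrix whose rows are x_i^T for i in S, listed in increasing order *)
Definition Xrows (R : realFieldType) (l n : nat) (x : 'I_l -> 'cV[R]_n)
  (S : {set 'I_l}) : 'M[R]_(#|S|, n) :=
  \matrix_(j < #|S|) (x (enum_val j))^T.

Definition Abar (R : realFieldType) (l1 n m1 m2 : nat) (A : 'M[R]_(l1, n))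
  (delta : R) (XB : 'M[R]_(m1, n)) (XC : 'M[R]_(m2, n)) : 'M[R]_(1 + (m1 + m2)) :=
  let As := Astar A delta in
  let e := ones R l1 in
  block_mx
    ((l1%:R)%:M - e^T *m A *m As *m A^T *m e)
    (row_mx ((ones R m1)^T - e^T *m A *m As *m XB^T)
            ((ones R m2)^T - e^T *m A *m As *m XC^T))
    (col_mx (- ones R m1 + XB *m As *m A^T *m e)
            (- ones R m2 + XC *m As *m A^T *m e))
    (block_mx (XB *m As *m XB^T) (XB *m As *m XC^T)
              (XC *m As *m XB^T) (XC *m As *m XC^T)).

Definition bbar (R : realFieldType) (m1 m2 : nat) (eps : R) : 'cV[R]_(1 + (m1 + m2)) :=
  col_mx 0 (col_mx (ones R m1) ((1 - eps) *: ones R m2)).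

(* Main.v *)
Require Import Defs.
From HB Require Import structures.
From mathcomp Require Import all_boot all_order all_algebra.
From mathcomp Require Import ring lra.
Import Order.TTheory GRing.Theory Num.Theory.
Local Open Scope ring_scope.

Section Help.
Variable R : realFieldType.

Lemma scD (M N : 'M[R]_1) : sc (M + N) = sc M + sc N. Proof. by rewrite /sc mxE. Qed.
Lemma scN (M : 'M[R]_1) : sc (- M) = - sc M. Proof. by rewrite /sc mxE. Qed.
Lemma scZ a (M : 'M[R]_1) : sc (a *: M) = a * sc M. Proof. by rewrite /sc mxE. Qed.
Lemma sc_sum (I : finType) (F : I -> 'M[R]_1) : sc (\sum_i F i) = \sum_i sc (F i).
Proof. by rewrite /sc summxE. Qed.

Lemma sc_lin n (I : finType) (y : 'rV[R]_n) (c : I -> R) (z : I -> 'cV[R]_n) :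
  sc (y *m \sum_i c i *: z i) = \sum_i c i * sc (y *m z i).
Proof.
rewrite mulmx_sumr sc_sum; apply: eq_bigr => i _; by rewrite -scalemxAr scZ.
Qed.

Lemma Xrows_mul l n (x : 'I_l -> 'cV[R]_n) (S : {set 'I_l}) (N : 'cV[R]_n) j :
  (Xrows x S *m N) j ord0 = sc ((x (enum_val j))^T *m N).
Proof.
rewrite /sc !mxE; apply: eq_bigr => k _; by rewrite !mxE.
Qed.

Lemma XrowsT_mul l n (x : 'I_l -> 'cV[R]_n) (S : {set 'I_l}) (v : 'cV[R]_#|S|) :
  (Xrows x S)^T *m v = \sum_j v j ord0 *: x (enum_val j).
Proof.
apply/matrixP => r c; rewrite !mxE summxE; apply: eq_bigr => j _.
by rewrite /Xrows !mxE ord1 mulrC.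
Qed.

Lemma ones_mul m (v : 'cV[R]_m) : sc ((ones R m)^T *m v) = \sum_j v j ord0.
Proof. rewrite /sc !mxE; apply: eq_bigr => j _; by rewrite !mxE mul1r. Qed.

Lemma mul1c m p (M : 'M[R]_(m,1)) (v : 'M[R]_(1,p)) i j : (M *m v) i j = M i ord0 * v ord0 j.
Proof. by rewrite !mxE big_ord1. Qed.

Lemma reindex l (S : {set 'I_l}) (g d : 'I_l -> R) :
  (forall i, i \notin S -> d i = 0) ->
  \sum_i g i * d i = \sum_(j < #|S|) g (enum_val j) * d (enum_val j).
Proof.
move=> H; rewrite (bigID (mem S)) /= [X in _ + X]big1 ?addr0.
  by rewrite big_enum_val.
by move=> i /H ->; rewrite mulr0.
Qed.

Lemma scB (M N : 'M[R]_1) : sc (M - N) = sc M - sc N. Proof. by rewrite scD scN. Qed.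

Lemma mx11 (M N : 'M[R]_1) : sc M = sc N -> M = N.
Proof. by move=> h; apply/matrixP => i j; rewrite !ord1. Qed.

Lemma diffA l (S : {set 'I_l}) (g a b : 'I_l -> R) :
  (forall i, i \notin S -> a i = b i) ->
  \sum_i a i * g i - \sum_i b i * g i
    = \sum_(j < #|S|) (a (enum_val j) - b (enum_val j)) * g (enum_val j).
Proof.
move=> H; rewrite -sumrB (eq_bigr (fun i => g i * (a i - b i))).
  rewrite (@reindex _ S); last by move=> i /H ->; rewrite subrr.
  by apply: eq_bigr => j _; rewrite mulrC.
by move=> i _; rewrite mulrBr !(mulrC (g i)).
Qed.

Lemma diffB l (S : {set 'I_l}) (g a b : 'I_l -> R) :
  (forall i, i \notin S -> a i = b i) ->
  \sum_i g i * a i - \sum_i g i * b i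
    = \sum_(j < #|S|) g (enum_val j) * (a (enum_val j) - b (enum_val j)).
Proof.
move=> H; rewrite -sumrB (eq_bigr (fun i => g i * (a i - b i))).
  by rewrite (@reindex _ S) //; move=> i /H ->; rewrite subrr.
by move=> i _; rewrite mulrBr.
Qed.

Lemma sum_entry n (I : finType) (c : I -> R) (z : I -> 'cV[R]_n) r s :
  (\sum_i c i *: z i) r s = \sum_i c i * z i r s.
Proof. by rewrite summxE; apply: eq_bigr => i _; rewrite mxE. Qed.

Lemma Xrows_mulE l n (x : 'I_l -> 'cV[R]_n) (S : {set 'I_l}) (N : 'cV[R]_n) :
  Xrows x S *m N = \col_j sc ((x (enum_val j))^T *m N).
Proof. by apply/matrixP => j c; rewrite ord1 Xrows_mul mxE. Qed.

Lemma scS l2 l3 n (y : 'rV[R]_n) (a : 'cV[R]_n) (x2 : 'I_l2 -> 'cV[R]_n)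
  (x3 : 'I_l3 -> 'cV[R]_n) a0 (al : 'I_l2 -> R) (be : 'I_l3 -> R) :
  sc (y *m (a0 *: a + \sum_i al i *: x2 i + \sum_k be k *: x3 k))
  = a0 * sc (y *m a) + \sum_i al i * sc (y *m x2 i) + \sum_k be k * sc (y *m x3 k).
Proof. by rewrite !mulmxDr !scD !sc_lin -scalemxAr scZ. Qed.

Lemma key_scalar (mu s a c : R) : 0 < mu -> - (- (mu^-1 * s) + a / mu) = c -> s - a = mu * c.
Proof. move=> hm <-; field; by rewrite gt_eqF. Qed.

Lemma sc_scalar (a : R) : sc (a%:M) = a. Proof. by rewrite /sc mxE mulr1n. Qed.
Lemma sc0 : sc (0 : 'M[R]_1) = 0. Proof. by rewrite /sc mxE. Qed.
Lemma sum_split (I : finType) (d s : I -> R) :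
  \sum_i (1 - s i) * d i = \sum_i d i - \sum_i d i * s i.
Proof. rewrite -sumrB; apply: eq_bigr => i _; ring. Qed.
Lemma col_sum1 m (f : 'I_m -> R) : \sum_j (\col_j0 f j0) j ord0 = \sum_j f j.
Proof. by apply: eq_bigr => j _; rewrite mxE. Qed.
Lemma col_sum2 m (f g : 'I_m -> R) : \sum_j (\col_j0 f j0) j ord0 * g j = \sum_j f j * g j.
Proof. by apply: eq_bigr => j _; rewrite mxE. Qed.
Lemma onesE m i j : ones R m i j = 1. Proof. by rewrite mxE. Qed.
Lemma sum_subst m (f t g : 'I_m -> R) c : (forall j, f j = c * t j) ->
  \sum_j f j * g j = c * \sum_j t j * g j.
Proof. move=> H; rewrite mulr_sumr; apply: eq_bigr => j _; by rewrite H mulrA. Qed.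
End Help.
Theorem theorem1 (R : realFieldType) (l1 l2 l3 n : nat) (A : 'M[R]_(l1, n))
  (x2 : 'I_l2 -> 'cV[R]_n) (x3 : 'I_l3 -> 'cV[R]_n) (eps delta : R)
  (alpha0 : R -> R) (alpha : R -> 'I_l2 -> R) (beta : R -> 'I_l3 -> R)
  (lamL lamL1 : R) :
  0 < eps -> eps < 1 -> 0 < delta ->
  solution_path A x2 x3 eps delta alpha0 alpha beta ->
  0 < lamL1 -> lamL1 < lamL ->
  (forall lam, lamL1 < lam <= lamL ->
     EB A x2 x3 delta alpha0 alpha beta lam = EB A x2 x3 delta alpha0 alpha beta lamL /\
         LB A x2 x3 delta alpha0 alpha beta lam = LB A x2 x3 delta alpha0 alpha beta lamL /\
         RB A x2 x3 delta alpha0 alpha beta lam = RB A x2 x3 delta alpha0 alpha beta lamL /\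
         EC A x2 x3 eps delta alpha0 alpha beta lam = EC A x2 x3 eps delta alpha0 alpha beta lamL /\
         LC A x2 x3 eps delta alpha0 alpha beta lam = LC A x2 x3 eps delta alpha0 alpha beta lamL /\
         RC A x2 x3 eps delta alpha0 alpha beta lam = RC A x2 x3 eps delta alpha0 alpha beta lamL) ->
  let SB := EB A x2 x3 delta alpha0 alpha beta lamL in
  let SC := EC A x2 x3 eps delta alpha0 alpha beta lamL in
  let m1 := #|SB| in
  let m2 := #|SC| in
  let XB := Xrows x2 SB in
  let XC := Xrows x3 SC in
  let Ab := Abar A delta XB XC in
  Ab \in unitmx ->
  let sol := invmx Ab *m bbar m1 m2 eps in
  let theta0 := sol (lshift (m1 + m2) ord0) ord0 in
  let theta := fun j : 'I_m1 => sol (rshift 1 (lshift m2 j)) ord0 in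
  let nu := fun k : 'I_m2 => sol (rshift 1 (rshift m1 k)) ord0 in
  let h1 := Astar A delta *m
              (theta0 *: (A^T *m ones R l1)
               + \sum_(j < m1) theta j *: x2 (enum_val j)
               + \sum_(k < m2) nu k *: x3 (enum_val k)) in
  let h2 := fun x : 'cV[R]_n => theta0 - sc (x^T *m h1) in
  let w1l := w1 A x2 x3 delta lamL (alpha0 lamL) (alpha lamL) (beta lamL) in
  let f1l := f1_at A x2 x3 delta alpha0 alpha beta lamL in
  forall lam, lamL1 < lam < lamL ->
    [/\ alpha0 lam = alpha0 lamL - (lamL - lam) * theta0,
        (forall j : 'I_m1,
           alpha lam (enum_val j) = alpha lamL (enum_val j) - (lamL - lam) * theta j),
        (forall k : 'I_m2,
           beta lam (enum_val k) = beta lamL (enum_val k) - (lamL - lam) * nu k),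
        w1 A x2 x3 delta lam (alpha0 lam) (alpha lam) (beta lam)
          = (lamL / lam) *: (w1l + h1) - h1 &
        (forall x : 'cV[R]_n,
           f1_at A x2 x3 delta alpha0 alpha beta lam x
             = (lamL / lam) * (f1l x - h2 x) + h2 x)].
Proof.
move=> eps0 eps1 del0 SP lL10 lL1L Hsets SB SC m1 m2 XB XC Ab Abu sol theta0 theta nu h1 h2 w1l f1l lam /andP[lam1 lamlt].
have hl : 0 < lam := lt_trans lL10 lam1.
have hL : 0 < lamL := lt_trans lL10 lL1L.
have [EBe [LBe [RBe [ECe [LCe RCe]]]]] := Hsets lam (introT andP (conj lam1 (ltW lamlt))).
set S := fun mu => alpha0 mu *: (A^T *m ones R l1) + \sum_i alpha mu i *: x2 i + \sum_k beta mu k *: x3 k.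
have f1E : forall mu x, f1_at A x2 x3 delta alpha0 alpha beta mu x
    = - (mu^-1 * sc (x^T *m Astar A delta *m S mu)) + alpha0 mu / mu.
  by move=> mu x; rewrite /f1_at /f1 /w1 /b1 mulmxN scN -scalemxAr scZ mulmxA.
have FB : forall mu, 0 < mu -> EB A x2 x3 delta alpha0 alpha beta mu = SB ->
   forall i, i \in SB -> sc ((x2 i)^T *m Astar A delta *m S mu) - alpha0 mu = mu.
  move=> mu hm HE i; rewrite -HE inE => /eqP; rewrite f1E => /key_scalar -> //; by rewrite mulr1.
have FC : forall mu, 0 < mu -> EC A x2 x3 eps delta alpha0 alpha beta mu = SC ->
   forall k, k \in SC -> sc ((x3 k)^T *m Astar A delta *m S mu) - alpha0 mu = mu * (1 - eps).
  move=> mu hm HE k; rewrite -HE inE => /eqP; rewrite f1E => /key_scalar -> //.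
have OB : forall i, i \notin SB -> alpha lam i = alpha lamL i.
  move=> i; rewrite inE => hne.
  case: (SP lam hl) => _ [_ [Ha _]]; case: (SP lamL hL) => _ [_ [HaL _]].
  have [lt1|gt1|eq1] := ltgtP (- f1_at A x2 x3 delta alpha0 alpha beta lamL (x2 i)) 1.
  - have : i \in LB A x2 x3 delta alpha0 alpha beta lam by rewrite LBe inE.
    rewrite inE => lt1'.
    by rewrite (proj1 (Ha i) lt1') (proj1 (HaL i) lt1).
  - have : i \in RB A x2 x3 delta alpha0 alpha beta lam by rewrite RBe inE.
    rewrite inE => gt1'.
    by rewrite (proj1 (proj2 (Ha i)) gt1') (proj1 (proj2 (HaL i)) gt1).
  - by rewrite eq1 eqxx in hne.
have OC : forall k, k \notin SC -> beta lam k = beta lamL k.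
  move=> k; rewrite inE => hne.
  case: (SP lam hl) => _ [_ [_ [Hb _]]]; case: (SP lamL hL) => _ [_ [_ [HbL _]]].
  have [lt1|gt1|eq1] := ltgtP (- f1_at A x2 x3 delta alpha0 alpha beta lamL (x3 k)) (1 - eps).
  - have : k \in LC A x2 x3 eps delta alpha0 alpha beta lam by rewrite LCe inE.
    rewrite inE => lt1'.
    by rewrite (proj1 (Hb k) lt1') (proj1 (HbL k) lt1).
  - have : k \in RC A x2 x3 eps delta alpha0 alpha beta lam by rewrite RCe inE.
    rewrite inE => gt1'.
    by rewrite (proj1 (proj2 (Hb k)) gt1') (proj1 (proj2 (HbL k)) gt1).
  - by rewrite eq1 eqxx in hne.
have Hc1 := (SP lam hl).2.2.2.2.
have Hc2 := (SP lamL hL).2.2.2.2.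
simpl in Hc1, Hc2.
set v : 'cV[R]_(1 + (m1 + m2)) := col_mx (alpha0 lam - alpha0 lamL)%:M
   (col_mx (\col_j (alpha lam (enum_val j) - alpha lamL (enum_val j)))
           (\col_k (beta lam (enum_val k) - beta lamL (enum_val k)))).
have Hv : Ab *m v = (lam - lamL) *: bbar m1 m2 eps.
  rewrite /Ab /Abar /v mul_block_col mul_row_col mul_col_mx mul_block_col add_col_mx /bbar !scale_col_mx.
  congr col_mx; [|congr col_mx].
  - apply: mx11.
    rewrite mul_mx_scalar !mulmxBl !scD !scZ !scB sc_scalar sc0 mulr0 !ones_mul -!mulmxA !XrowsT_mul !mulmxA !scN !sc_lin.
    rewrite !col_sum1 !col_sum2.
    have dB := @diffB _ _ _ (fun i => 1 - sc ((ones R l1)^T *m A *m Astar A delta *m x2 i)) _ _ OB.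
    have dC := @diffB _ _ _ (fun i => 1 - sc ((ones R l1)^T *m A *m Astar A delta *m x3 i)) _ _ OC.
    rewrite (@sum_split _ _ (fun j => alpha lam (enum_val j) - alpha lamL (enum_val j))) in dB.
    rewrite (@sum_split _ _ (fun j => beta lam (enum_val j) - beta lamL (enum_val j))) in dC.
    lra.
  - apply/matrixP => j c; rewrite ord1.
    rewrite mul_mx_scalar -!mulmxA !Xrows_mulE !XrowsT_mul !mxE ?onesE !mulmxA !sc_lin !col_sum2.
    have h1' := FB lam hl EBe _ (enum_valP j).
    have h2' := FB lamL hL erefl _ (enum_valP j).
    rewrite /S !scS !mulmxA in h1' h2'.
    have dA := @diffA _ _ SB (fun i => sc ((x2 (enum_val j))^T *m Astar A delta *m x2 i)) _ _ OB.
    have dC := @diffA _ _ SC (fun k => sc ((x2 (enum_val j))^T *m Astar A delta *m x3 k)) _ _ OC.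
    simpl in dA, dC. lra.
  - apply/matrixP => j c; rewrite ord1.
    rewrite mul_mx_scalar -!mulmxA !Xrows_mulE !XrowsT_mul !mxE ?onesE !mulmxA !sc_lin !col_sum2.
    have h1' := FC lam hl ECe _ (enum_valP j).
    have h2' := FC lamL hL erefl _ (enum_valP j).
    rewrite /S !scS !mulmxA in h1' h2'.
    have dA := @diffA _ _ SB (fun i => sc ((x3 (enum_val j))^T *m Astar A delta *m x2 i)) _ _ OB.
    have dC := @diffA _ _ SC (fun k => sc ((x3 (enum_val j))^T *m Astar A delta *m x3 k)) _ _ OC.
    simpl in dA, dC. lra.
have Hv2 : v = (lam - lamL) *: sol.
  by rewrite /sol scalemxAr -Hv mulKmx.
have E0 : alpha0 lam - alpha0 lamL = (lam - lamL) * theta0.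
  move: (congr1 (fun M : 'cV[R]_(1 + (m1 + m2)) => M (lshift (m1 + m2) ord0) ord0) Hv2).
  by rewrite /v col_mxEu [in X in X = _ -> _]mxE eqxx mulr1n [in X in _ = X -> _]mxE.
have EBj : forall j, alpha lam (enum_val j) - alpha lamL (enum_val j) = (lam - lamL) * theta j.
  move=> j; move: (congr1 (fun M : 'cV[R]_(1 + (m1 + m2)) => M (rshift 1 (lshift m2 j)) ord0) Hv2).
  by rewrite /v col_mxEd col_mxEu [in X in X = _ -> _]mxE [in X in _ = X -> _]mxE.
have ECk : forall k, beta lam (enum_val k) - beta lamL (enum_val k) = (lam - lamL) * nu k.
  move=> k; move: (congr1 (fun M : 'cV[R]_(1 + (m1 + m2)) => M (rshift 1 (rshift m1 k)) ord0) Hv2).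
  by rewrite /v !col_mxEd [in X in X = _ -> _]mxE [in X in _ = X -> _]mxE.
have A0 : alpha0 lam = alpha0 lamL - (lamL - lam) * theta0 by lra.
have HS : S lam = S lamL + (lam - lamL) *: (theta0 *: (A^T *m ones R l1)
               + \sum_(j < m1) theta j *: x2 (enum_val j)
               + \sum_(k < m2) nu k *: x3 (enum_val k)).
  apply/matrixP => r c; rewrite /S !mxE !sum_entry.
  have dA := @diffA _ _ SB (fun i => x2 i r c) _ _ OB.
  have dC := @diffA _ _ SC (fun k => x3 k r c) _ _ OC.
  simpl in dA, dC.
  rewrite (@sum_subst _ _ _ _ _ _ EBj) in dA; rewrite (@sum_subst _ _ _ _ _ _ ECk) in dC.
  rewrite A0; lra.
have w1E : forall mu, w1 A x2 x3 delta mu (alpha0 mu) (alpha mu) (beta mu)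
   = - (mu^-1 *: (Astar A delta *m S mu)) by [].
have Hw1 : w1 A x2 x3 delta lam (alpha0 lam) (alpha lam) (beta lam)
          = (lamL / lam) *: (w1l + h1) - h1.
  rewrite /w1l !w1E HS /h1 mulmxDr -scalemxAr.
  move: (Astar A delta *m S lamL) (Astar A delta *m _) => P Q.
  apply/matrixP => r c; rewrite !mxE; field.
  by rewrite !gt_eqF.
have f1E' : forall mu x, f1_at A x2 x3 delta alpha0 alpha beta mu x
   = sc (x^T *m w1 A x2 x3 delta mu (alpha0 mu) (alpha mu) (beta mu)) + alpha0 mu / mu by [].
split.
- exact: A0.
- move=> j; have := EBj j; lra.
- move=> k; have := ECk k; lra.
- exact: Hw1.
- move=> x; rewrite /f1l /h2 !f1E' Hw1 /w1l mulmxBr -scalemxAr mulmxDr scB scZ scD A0.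
  field; by rewrite !gt_eqF.
Qed.
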